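(* Let $(\Omega,\mathcal A)$ be a measurable space and let $K\subset\mathbb C^n$ be a compact set. Then $R_\Omega^{unif}(K)=R_\Omega(K)$.
   Context: A random function $f:\Omega\times X\to\mathbb C$ (with $X$ any set) is a function such that $f(\cdot,x)$ is measurable (with respect to $\mathcal A$ and the Borel sets of $\mathbb C$) for every $x\in X$. A random rational function with no poles on $K$ is a function $r(\omega,z)$ such that for each $\omega$, $r(\omega,\cdot)$ is a rational function on $\mathbb C^n$ with no poles on $K$, and $r(\cdot,z)$ is measurable for each $z$. Consider random functions $f:\Omega\times K\to\mathbb C$ such that $f(\omega,\cdot)$ is continuous on $K$ and holomorphic on the interior of $K$ for every $\omega$. Such an $f$ belongs to $R_\Omega(K)$ if there is a sequence $r_j$ of random rational functions with no poles on $K$ such that for every $\omega\in\Omega$, $r_j(\omega,\cdot)\to f(\omega,\cdot)$ uniformly on $K$. Such an $f$ belongs to $R_\Omega^{unif}(K)$ if for every $\varepsilon>0$ there is a random rational function $r$ with no poles on $K$ such that $|r(\omega,z)-f(\omega,z)|<\varepsilon$ for all $(\omega,z)\in\Omega\times K$. *)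

(* Defs.v *)
From HB Require Import structures.
From mathcomp Require Import all_boot all_order all_algebra.
From mathcomp Require Import all_classical all_reals all_analysis.
From mathcomp Require Import complex.
From mathcomp Require mpoly.
Set Implicit Arguments. Unset Strict Implicit. Unset Printing Implicit Defensive.
Import Order.TTheory GRing.Theory Num.Theory.
Import numFieldNormedType.Exports.
Local Open Scope classical_set_scope.
Local Open Scope ring_scope.

(* C is a numClosedFieldType, hence a normed field, and C^n is modelled as the
   normed C-vector space of row vectors 'rV[C]_n. *)
Definition Cx (R : realType) : numClosedFieldType := complex R.

Definition borel_measurableC (R : realType) (d : measure_display)
    (T : measurableType d) (f : T -> Cx R) : Prop :=
  forall B : set (Cx R), <<s @open (Cx R) >> B -> measurable (f @^-1` B).

Definition random_fun (R : realType) (d : measure_display)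
    (T : measurableType d) (X : Type) (A : set X) (f : T -> X -> Cx R) : Prop :=
  forall x, A x -> borel_measurableC (fun w => f w x).

Definition peval (R : realType) (n : nat) (p : mpoly.mpoly n (Cx R))
    (z : 'rV[Cx R]_n) : Cx R :=
  mpoly.meval (fun i => z ord0 i) p.

Definition rational_no_poles_on (R : realType) (n : nat)
    (K : set 'rV[Cx R]_n) (g : 'rV[Cx R]_n -> Cx R) : Prop :=
  exists p q : mpoly.mpoly n (Cx R),
    forall z, K z -> peval q z != 0 /\ g z = peval p z / peval q z.

Definition random_rational (R : realType) (d : measure_display)
    (T : measurableType d) (n : nat) (K : set 'rV[Cx R]_n)
    (r : T -> 'rV[Cx R]_n -> Cx R) : Prop :=
  (forall w, rational_no_poles_on K (r w)) /\ random_fun K r.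

Definition admissible (R : realType) (d : measure_display)
    (T : measurableType d) (n : nat) (K : set 'rV[Cx R]_n)
    (f : T -> 'rV[Cx R]_n -> Cx R) : Prop :=
  random_fun K f /\
  (forall w, {within K, continuous (f w)}) /\
  (forall w z, (K°) z -> differentiable (f w) z).

Definition R_Omega (R : realType) (d : measure_display)
    (T : measurableType d) (n : nat) (K : set 'rV[Cx R]_n)
    (f : T -> 'rV[Cx R]_n -> Cx R) : Prop :=
  admissible K f /\
  exists r : nat -> T -> 'rV[Cx R]_n -> Cx R,
    (forall j, random_rational K (r j)) /\
    forall w (e : Cx R), 0 < e -> exists N : nat, forall j, (N <= j)%N ->
      forall z, K z -> `|r j w z - f w z| < e.

Definition R_Omega_unif (R : realType) (d : measure_display)
    (T : measurableType d) (n : nat) (K : set 'rV[Cx R]_n)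
    (f : T -> 'rV[Cx R]_n -> Cx R) : Prop :=
  admissible K f /\
  forall e : Cx R, 0 < e -> exists r : T -> 'rV[Cx R]_n -> Cx R,
    random_rational K r /\ forall w z, K z -> `|r w z - f w z| < e.

(* Main.v *)
Require Import Defs.
From HB Require Import structures.
From mathcomp Require Import all_boot all_order all_algebra.
From mathcomp Require Import all_classical all_reals all_analysis.
From mathcomp Require Import complex.
From mathcomp Require mpoly.
Import numFieldNormedType.Exports.
Import Order.TTheory GRing.Theory Num.Theory.
Local Open Scope classical_set_scope.
Local Open Scope ring_scope.
Local Open Scope complex_scope.
Set Implicit Arguments. Unset Strict Implicit.
Lemma arch_C (R : realType) (e : Cx R) : 0 < e -> exists N : nat, (N.+1%:R)^-1 < e.
Proof.
case: e => a b; rewrite ltcE /= => /andP[/eqP b0 a0]; subst b.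
exists (Num.Def.trunc (a^-1)).
have -> : ((Num.Def.trunc a^-1).+1%:R : Cx R) = ((Num.Def.trunc a^-1).+1%:R : R)%:C.
  by rewrite rmorph_nat.
rewrite -fmorphV.
change (a +i* 0) with (a%:C).
rewrite ltcR.
rewrite -[X in _ < X]invrK ltf_pV2 ?posrE ?invr_gt0 //.
all: try exact: ltr0Sn.
exact: truncnS_gt.
Qed.
From mathcomp Require Import lra.
Definition qc (R : realType) (k : nat) : Cx R :=
  if @unpickle (rat * rat)%type k is Some p then (ratr p.1 +i* ratr p.2) else 0.

Lemma qc_dense (R : realType) (z e : Cx R) : 0 < e -> exists k, `|z - qc R k| < e.
Proof.
case: e => c b; rewrite ltcE /= => /andP[/eqP b0 c0]; subst b.
case: z => x y.
have c2 : x - c / 2 < x + c / 2 by lra.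
have c2' : y - c / 2 < y + c / 2 by lra.
have [qa] := rat_in_itvoo c2; rewrite in_itv /= => /andP[qa1 qa2].
have [qb] := rat_in_itvoo c2'; rewrite in_itv /= => /andP[qb1 qb2].
exists (pickle (qa, qb)); rewrite /qc pickleK /=.
rewrite normc_def /=.
change (c +i* 0) with (c%:C).
rewrite ltcR.
rewrite -(ger0_norm (ltW c0)) -sqrtr_sqr ltr_sqrt ?exprn_gt0 //.
nra.
Qed.
Lemma open_gen (R : realType) (q r : Cx R) :
  <<s @open (Cx R) >> [set z : Cx R | `|q - z| < r].
Proof.
have -> : [set z : Cx R | `|q - z| < r] = ball q r by rewrite -ball_normE.
apply: sub_sigma_algebra; exact: ball_open.
Qed.

Lemma meas_lt (R : realType) (d : measure_display) (T : measurableType d)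
  (g h : T -> Cx R) : borel_measurableC g -> borel_measurableC h ->
  forall c : Cx R, 0 < c -> measurable [set w | `|g w - h w| < c].
Proof.
move=> mg mh c c0.
pose dl (m : nat) : Cx R := (m.+1%:R)^-1.
have -> : [set w | `|g w - h w| < c] =
  \bigcup_m \bigcup_k (g @^-1` [set z | `|qc R k - z| < dl m] `&`
                        h @^-1` [set z | `|qc R k - z| < c - dl m]).
  apply/seteqP; split => w /=.
  - move=> H.
    have d0 : 0 < (c - `|g w - h w|) / 2 by rewrite divr_gt0 // subr_gt0.
    have [m Hm] := @arch_C _ _ d0.
    have dm0 : 0 < dl m by rewrite invr_gt0 ltr0Sn.
    have [k Hk] := @qc_dense _ (g w) _ dm0.
    exists m => //; exists k => //; split => /=.
      by rewrite distrC.
    apply: (le_lt_trans (ler_distD (g w) _ _)).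
    rewrite ltrBrDr.
    rewrite ltr_pdivlMr // mulr_natr mulr2n ltrBrDr in Hm.
    apply: (lt_le_trans (y := dl m + `|g w - h w| + dl m)).
      by rewrite ltrD2r ltrD2r distrC.
    by rewrite addrAC ltW.
  - move=> [m _ [k _ [/= H1 H2]]].
    apply: (le_lt_trans (ler_distD (qc R k) _ _)).
    rewrite -[c](subrK (dl m)) addrC.
    by apply: ltrD => //; rewrite distrC.
rewrite -[X in measurable X]/(\bigcup_m _).
apply: bigcupT_measurable => m; apply: bigcupT_measurable => k.
apply: measurableI.
exact: (mg _ (@open_gen R _ _)).
exact: (mh _ (@open_gen R _ _)).
Qed.
Lemma cont_sum (R : realType) (n : nat) (I : Type) (s : seq I)
  (F : I -> 'rV[Cx R]_n -> Cx R) :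
  (forall i, continuous (F i)) -> continuous (fun z => \sum_(i <- s) F i z).
Proof.
move=> Fc; elim: s => [|i s IH].
  by under eq_fun do rewrite big_nil; exact: cst_continuous.
under eq_fun do rewrite big_cons.
move=> z; exact: (cvgD (Fc i z) (IH z)).
Qed.

Lemma cont_prod (R : realType) (n : nat) (I : Type) (s : seq I)
  (F : I -> 'rV[Cx R]_n -> Cx R) :
  (forall i, continuous (F i)) -> continuous (fun z => \prod_(i <- s) F i z).
Proof.
move=> Fc; elim: s => [|i s IH].
  by under eq_fun do rewrite big_nil; exact: cst_continuous.
under eq_fun do rewrite big_cons.
move=> z; exact: (cvgM (Fc i z) (IH z)).
Qed.

Lemma cont_pow (R : realType) (n : nat) (f : 'rV[Cx R]_n -> Cx R) (k : nat) :
  continuous f -> continuous (fun z => f z ^+ k).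
Proof.
move=> fc; elim: k => [|k IH].
  by under eq_fun do rewrite expr0; exact: cst_continuous.
under eq_fun do rewrite exprS.
move=> z; exact: (cvgM (fc z) (IH z)).
Qed.

Lemma cont_mul (R : realType) (n : nat) (f g : 'rV[Cx R]_n -> Cx R) :
  continuous f -> continuous g -> continuous (fun z => f z * g z).
Proof. move=> fc gc z; exact: (cvgM (fc z) (gc z)). Qed.

Lemma peval_cont (R : realType) (n : nat) (p : mpoly.mpoly n (Cx R)) :
  continuous (peval p).
Proof.
rewrite /peval.
under eq_fun do rewrite mpoly.mevalE.
apply: cont_sum => m.
apply: cont_mul; first exact: cst_continuous.
apply: cont_prod => i.
apply: cont_pow.
exact: coord_continuous.
Qed.
Lemma cont_eps (R : realType) (n : nat) (h : 'rV[Cx R]_n -> Cx R) (z : 'rV[Cx R]_n) :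
  h x @[x --> z] --> h z ->
  forall e : Cx R, 0 < e -> exists2 dl : Cx R, 0 < dl &
    forall y, ball z dl y -> `|h z - h y| < e.
Proof.
move=> /(@cvgrPdist_lt _ _ _ _ _ h (h z)) H e e0.
have := H e e0 => /nbhs_ballP [dl dl0 Hd].
by exists dl.
Qed.

Lemma within_eps (R : realType) (n : nat) (K : set 'rV[Cx R]_n)
  (h : 'rV[Cx R]_n -> Cx R) : {within K, continuous h} ->
  forall z, K z -> forall e : Cx R, 0 < e -> exists2 dl : Cx R, 0 < dl &
    forall y, K y -> ball z dl y -> `|h z - h y| < e.
Proof.
move=> hc z Kz e e0.
have := (proj1 (subspace_continuousP _ h) hc) z Kz.
move=> /(@cvgrPdist_lt _ _ _ _ _ h (h z)) /(_ e e0).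
rewrite /within => /nbhs_ballP [dl dl0 Hd].
exists dl => // y Ky bzy; exact: Hd.
Qed.

Lemma rat_eps (R : realType) (n : nat) (K : set 'rV[Cx R]_n)
  (g : 'rV[Cx R]_n -> Cx R) : rational_no_poles_on K g ->
  forall z, K z -> forall e : Cx R, 0 < e -> exists2 dl : Cx R, 0 < dl &
    forall y, K y -> ball z dl y -> `|g z - g y| < e.
Proof.
move=> [p [q Hpq]] z Kz e e0.
have [qz gz] := Hpq z Kz.
have hc : (fun y => peval p y * (peval q y)^-1) x @[x --> z] -->
          peval p z * (peval q z)^-1.
  exact: (cvgM (@peval_cont R n p z) (cvgV qz (@peval_cont R n q z))).
have [dl dl0 Hd] := @cont_eps R n _ z hc e e0.
exists dl => // y Ky bzy.
have [_ gy] := Hpq y Ky.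
by rewrite gz gy; exact: Hd.
Qed.
Lemma net (R : realType) (n : nat) (K : set 'rV[Cx R]_n) : compact K ->
  exists pt : nat -> nat -> 'rV[Cx R]_n, forall z, K z -> forall m : nat,
    exists k, K (pt m k) /\ ball (pt m k) ((m.+1%:R)^-1 : Cx R) z.
Proof.
move=> cK.
have H : forall m : nat, exists s : seq 'rV[Cx R]_n, forall z, K z ->
    exists2 x, x \in s & K x /\ ball x ((m.+1%:R)^-1 : Cx R) z.
  move=> m.
  have dm0 : 0 < ((m.+1%:R)^-1 : Cx R) by rewrite invr_gt0 ltr0Sn.
  rewrite compact_cover in cK.
  have op : forall x, K x -> open (ball x ((m.+1%:R)^-1 : Cx R)).
    by move=> x _; exact: ball_open.
  have cv : K `<=` cover K (fun x => ball x ((m.+1%:R)^-1 : Cx R)).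
    by move=> z Kz; exists z => //; exact: ballxx.
  have [D' D'K cov] := cK _ K _ op cv.
  exists (finmap.enum_fset D') => z /cov [x /= xD bz].
  exists x => //; split => //.
by have := D'K _ xD; rewrite in_setE.
have [S HS] := choice H.
exists (fun m k => nth 0 (S m) k) => z Kz m.
have [x xS [Kx bx]] := HS m z Kz.
exists (index x (S m)); by rewrite nth_index.
Qed.
Lemma meas_imp (d : measure_display) (T : measurableType d) (P : Prop) (S : set T) :
  (P -> measurable S) -> measurable [set w | P -> S w].
Proof.
case: (pselect P) => [p|np] mS.
  have -> : [set w | P -> S w] = S by apply/seteqP; split => w /=; auto.
  exact: mS.
have -> : [set w | P -> S w] = setT by apply/seteqP; split => w //= _ /np.
exact: measurableT.
Qed.

Unset Implicit Arguments.
Set Strict Implicit.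

Theorem theorem3p1 (R : realType) (d : measure_display) (T : measurableType d)
    (n : nat) (K : set 'rV[Cx R]_n) :
  compact K ->
  forall f : T -> 'rV[Cx R]_n -> Cx R, R_Omega_unif K f <-> R_Omega K f.
Proof.
move=> cK f; split.
- move=> [adm H]; split => //.
  have H' : forall j : nat, exists r, random_rational K r /\
      forall w z, K z -> `|r w z - f w z| < (j.+1%:R)^-1.
    by move=> j; apply: H; rewrite invr_gt0 ltr0Sn.
  have [r Hr] := choice H'.
  exists r; split; first by move=> j; case: (Hr j).
  move=> w e e0; have [N HN] := @arch_C R e e0.
  exists N => j Nj z Kz.
  apply: (lt_le_trans ((Hr j).2 w z Kz)).
  apply: ltW; apply: le_lt_trans HN.
  by rewrite lef_pV2 ?posrE ?ltr0Sn // ler_nat ltnS.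
- move=> [adm [r [rr conv]]]; split => // e e0.
  have [pt Hpt] := @net R n K cK.
  pose c := e / 3%:R.
  have c0 : 0 < c by rewrite divr_gt0 // ltr0Sn.
  pose P j w := forall m k, K (pt m k) -> `|r j w (pt m k) - f w (pt m k)| < c.
  have Pm : forall j, measurable [set w | P j w].
    move=> j.
    have -> : [set w | P j w] = \bigcap_m \bigcap_k
        [set w | K (pt m k) -> `|r j w (pt m k) - f w (pt m k)| < c].
      by apply/seteqP; split => w /= Hw; [move=> m _ k _ | move=> m k]; apply: Hw.
    apply: bigcapT_measurable => m; apply: bigcapT_measurable => k.
    apply: meas_imp => Kp.
    exact: (meas_lt ((rr j).2 _ Kp) (adm.1 _ Kp) c0).
  have Pex : forall w, exists j, `[< P j w >].
    move=> w; have [N HN] := conv w c c0.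
    by exists N; apply/asboolP => m k Kp; apply: HN.
  have Pgood : forall j w, P j w -> forall z, K z -> `|r j w z - f w z| < e.
    move=> j w Pj z Kz.
    have [d1 d10 Hd1] := rat_eps ((rr j).1 w) Kz c0.
    have [d2 d20 Hd2] := within_eps (adm.2.1 w) Kz c0.
    have [m1 Hm1] := @arch_C R d1 d10.
    have [m2 Hm2] := @arch_C R d2 d20.
    pose M := maxn m1 m2.
    have [k [Kp bp]] := Hpt z Kz M.
    have bz : ball z ((M.+1%:R)^-1) (pt M k) by apply: ball_sym.
    have leM : forall m, (m <= M)%N -> ((M.+1%:R)^-1 : Cx R) <= (m.+1%:R)^-1.
      by move=> m mM; rewrite lef_pV2 ?posrE ?ltr0Sn // ler_nat ltnS.
    have b1 : ball z d1 (pt M k).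
      apply: (le_ball _ bz); apply: ltW; apply: le_lt_trans Hm1.
      by apply: leM; rewrite leq_maxl.
    have b2 : ball z d2 (pt M k).
      apply: (le_ball _ bz); apply: ltW; apply: le_lt_trans Hm2.
      by apply: leM; rewrite leq_maxr.
    set y := pt M k in Kp b1 b2 bz.
    apply: (le_lt_trans (ler_distD (r j w y) _ _)).
    have e3 : e + (e + e) = e * 3%:R by rewrite mulr_natr !mulrS mulr0n addr0.
    have -> : e = c + (c + c) by rewrite /c -!mulrDl e3 mulfK // pnatr_eq0.
    apply: ltrD; first exact: Hd1.
    apply: (le_lt_trans (ler_distD (f w y) _ _)).
    apply: ltrD; first exact: Pj.
    by rewrite distrC; exact: Hd2.
  pose N w := ex_minn (Pex w).
  have NP : forall w, P (N w) w /\ forall i, P i w -> (N w <= i)%N.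
    move=> w; rewrite /N; case: ex_minnP => m /asboolP Pm' Hm; split => // i Pi.
    by apply: Hm; apply/asboolP.
  exists (fun w z => r (N w) w z); split; last first.
    by move=> w z Kz; exact: Pgood (NP w).1 z Kz.
  split; first by move=> w; exact: (rr (N w)).1 w.
  move=> z Kz B HB.
  have -> : (fun w => r (N w) w z) @^-1` B =
      \bigcup_j ([set w | N w = j] `&` (fun w => r j w z) @^-1` B).
    apply/seteqP; split => w /=.
      by move=> HBw; exists (N w) => //.
    by move=> [j _ [/= <-]].
  apply: bigcupT_measurable => j; apply: measurableI; last first.
    exact: ((rr j).2 z Kz B HB).
  have -> : [set w | N w = j] =
      [set w | P j w] `&` \bigcap_i [set w | (i < j)%N -> ~ P i w].
    apply/seteqP; split => w /=.
      move=> <-; split; first exact: (NP w).1.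
      by move=> i _ iN Pi; have := (NP w).2 i Pi; rewrite leqNgt iN.
    move=> [Pj Hi]; apply/eqP; rewrite eqn_leq (NP w).2 //=.
    rewrite leqNgt; apply/negP => jN.
    exact: (Hi (N w) I jN (NP w).1).
  apply: measurableI; first exact: Pm.
  apply: bigcapT_measurable => i; apply: meas_imp => _.
  exact: (measurableC (Pm i)).
Qed.
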